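(* Let $(q(x),q(x,dy))$ be a totally stable conservative $q$-pair on a measurable space $(E,\mathscr E)$ and let $c:E\to\mathbb R$ be measurable with $\sup_x c(x)\le0$ and $q(x)-c(x)>0$ for all $x$. Set $\Omega f(x)=\int_Eq(x,dy)[f(y)-f(x)]+c(x)f(x)$. Define $z^{(0)}\equiv1$ and $z^{(n+1)}(x)=\int_E\frac{q(x,dy)}{q(x)-c(x)}z^{(n)}(y)$, $x\in E$, $n\ge0$. Then $z^{(n)}(x)$ is non-increasing in $n$ for each $x$, with limit $\bar z(x)\in[0,1]$, and there exists a bounded measurable $h:E\to\mathbb R$, not identically zero, with $\Omega h(x)=0$ for all $x\in E$ if and only if $\bar z$ is not identically zero.
   Context: A $q$-pair $(q(x),q(x,dy))$ on $(E,\mathscr E)$: for each $x$, $q(x,\cdot)$ is a nonnegative measure on $\mathscr E$, $x\mapsto q(x,A)$ is measurable; totally stable means $q(x)<\infty$ for all $x$, conservative means $q(x)=q(x,E)$ for all $x$. *)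

(* Defs.v *)
From HB Require Import structures.
From mathcomp Require Import all_boot all_order all_algebra.
From mathcomp Require Import all_classical all_reals all_analysis.
From mathcomp Require Import measurable_realfun.
Set Implicit Arguments. Unset Strict Implicit. Unset Printing Implicit Defensive.
Import Order.TTheory GRing.Theory Num.Theory.
Local Open Scope classical_set_scope.
Local Open Scope ring_scope.
Local Open Scope ereal_scope.

(* Totally stable:
   q(x) < oo (q is real valued). *)
Definition qpair_tsc d (E : measurableType d) (R : realType)
  (q : E -> R) (qk : E -> {measure set E -> \bar R}) : Prop :=
  (forall A, measurable A -> measurable_fun [set: E] (qk ^~ A)) /\
  (forall x, (q x)%:E = qk x setT).

Definition Omega d (E : measurableType d) (R : realType)
  (qk : E -> {measure set E -> \bar R}) (c : E -> R) (f : E -> R) (x : E)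
  : \bar R :=
  (\int[qk x]_y ((f y - f x)%R)%:E) + ((c x * f x)%R)%:E.

Fixpoint zseq d (E : measurableType d) (R : realType)
  (q : E -> R) (qk : E -> {measure set E -> \bar R}) (c : E -> R) (n : nat)
  : E -> \bar R :=
  match n with
  | 0%N => fun _ => 1
  | n'.+1 => fun x =>
      (\int[qk x]_y zseq q qk c n' y) * (((q x - c x)^-1)%R)%:E
  end.

(* Main.v *)
Require Import Defs.
From HB Require Import structures.
From mathcomp Require Import all_boot all_order all_algebra.
From mathcomp Require Import all_classical all_reals all_analysis.
From mathcomp Require Import measurable_realfun.
From mathcomp Require Import ring lra.
Import Order.TTheory GRing.Theory Num.Theory.
Local Open Scope classical_set_scope.
Local Open Scope ring_scope.
Local Open Scope ereal_scope.

Section Main.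
Context d (E : measurableType d) (R : realType) (q : E -> R)
  (qk : E -> {measure set E -> \bar R}) (c : E -> R).
Hypothesis Hq : qpair_tsc q qk.
Hypothesis mc : measurable_fun setT c.
Hypothesis c0 : forall x, (c x <= 0)%R.
Hypothesis qc0 : forall x, (0 < q x - c x)%R.

Let z := zseq q qk c.
Let k x := ((q x - c x)^-1)%R.

Lemma bnd_fineK (x : \bar R) : 0 <= x -> x <= 1 -> (fine x)%:E = x.
Proof.
move=> h0 h1; rewrite fineK // ge0_fin_numE //.
exact: (le_lt_trans h1 (ltry _)).
Qed.

Lemma bnd_of (f : E -> R) (M : R) : (forall x, `|f x| <= M)%R ->
  [bounded f x | x in setT].
Proof.
move=> hM; rewrite /bounded_near; near=> N => t _ /=.
apply: (le_trans (hM t)); near: N; exact: nbhs_pinfty_ge (num_real M).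
Unshelve. all: end_near.
Qed.

Lemma qfin x : qk x setT < +oo.
Proof. by rewrite -(proj2 Hq x) ltry. Qed.

Lemma mq : measurable_fun setT q.
Proof.
apply/measurable_EFinP.
have -> : EFin \o q = (fun x => qk x setT) by apply/funext => x; exact: (proj2 Hq x).
exact: (proj1 Hq).
Qed.

Lemma mk : measurable_fun setT k.
Proof.
have -> : k = (fun r : R => powR r (-1)%R) \o (fun x => q x - c x)%R.
  by apply/funext => x; rewrite /k /= powRN powRr1 //; exact: ltW (qc0 x).
apply: measurableT_comp; first exact: measurable_powR.
exact: measurable_funB mq mc.
Qed.

Lemma k0 x : (0 <= k x)%R.
Proof. by rewrite /k invr_ge0 ltW. Qed.

Lemma zS n x : z n.+1 x = (\int[qk x]_y z n y) * (k x)%:E.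
Proof. by []. Qed.

Lemma z_prop n : measurable_fun setT (z n) /\ forall x, 0 <= z n x <= 1.
Proof.
elim: n => [|n [mz bz]].
  split; first exact: measurable_cst.
  by move=> x; rewrite /z /= lee01 lexx.
split.
  apply: emeasurable_funM; last exact/measurable_EFinP/mk.
  apply: measurable_fun_integral_kernel => //; first exact: (proj1 Hq).
  by move=> y; case/andP: (bz y).
move=> x; rewrite zS.
have I0 : 0 <= \int[qk x]_y z n y by apply: integral_ge0 => y _; case/andP: (bz y).
have I1 : \int[qk x]_y z n y <= (q x)%:E.
  apply: (@le_trans _ _ (\int[qk x]_y (cst 1 y))).
    apply: ge0_le_integral => //.
    - by move=> y _; case/andP: (bz y).
    - by move=> y _; case/andP: (bz y).
  by rewrite integral_cst // mul1e (proj2 Hq x).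
apply/andP; split; first by rewrite mule_ge0 // lee_fin k0.
apply: (@le_trans _ _ ((q x)%:E * (k x)%:E)); first by apply: lee_wpmul2r => //; rewrite lee_fin k0.
rewrite -EFinM lee_fin /k ler_pdivrMr // mul1r.
have := c0 x; lra.
Qed.

Lemma z_dec n x : z n.+1 x <= z n x.
Proof.
elim: n x => [|n IH] x.
  by case/andP: ((z_prop 1).2 x).
rewrite zS [z n.+1 x]zS.
apply: lee_wpmul2r; first by rewrite lee_fin k0.
apply: ge0_le_integral => //.
- by move=> y _; case/andP: ((z_prop n.+1).2 y).
- exact: (z_prop n.+1).1.
- exact: (z_prop n).1.
Qed.

Lemma z_mono x m n : (m <= n)%N -> z n x <= z m x.
Proof.
elim: n => [|n IH]; first by rewrite leqn0 => /eqP ->.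
rewrite leq_eqVlt => /orP[/eqP -> | ]; first by rewrite lexx.
rewrite ltnS => /IH; exact: le_trans (z_dec n x).
Qed.


Let zbar x := ereal_inf (range (fun n => z n x)).

Lemma zbar_cvg x : (fun n => z n x) @ \oo --> zbar x.
Proof. by apply: ereal_nonincreasing_cvgn => m n mn; exact: z_mono. Qed.

Lemma zbar_bnd x : 0 <= zbar x <= 1.
Proof.
apply/andP; split.
  by apply/ereal_infP => _ [n _ <-]; case/andP: ((z_prop n).2 x).
have -> : (1 : \bar R) = z 0 x by [].
by apply: ereal_inf_lbound; exists 0%N.
Qed.

Lemma mzbar : measurable_fun setT zbar.
Proof.
apply: (@emeasurable_fun_cvg _ _ _ _ z) => //.
- by move=> m; exact: (z_prop m).1.
- by move=> x _; exact: zbar_cvg.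
Qed.

Lemma zbar_eq x : \int[qk x]_y zbar y = zbar x * (q x - c x)%:E.
Proof.
have ig : (qk x).-integrable setT (EFin \o cst 1%R).
  apply: measurable_bounded_integrable => //; first exact: qfin.
  exact: bounded_cst.
have fg : {ae qk x, forall y n, setT y -> `|z n y| <= (EFin \o cst 1%R) y}.
  apply: aeW => y n _; have /andP[h0 h1] := (z_prop n).2 y.
  by rewrite gee0_abs.
have [_ _ dc] := @dominated_convergence _ _ _ (qk x) setT measurableT z zbar
  (EFin \o cst 1%R) (fun n => (z_prop n).1) mzbar
  (aeW _ (fun y _ => zbar_cvg y)) ig fg.
have e : (fun n => \int[qk x]_y z n y) = (fun n => z n.+1 x * (q x - c x)%:E).
  apply/funext => n; rewrite zS -muleA -EFinM /k mulVf ?mule1 //.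
  exact: lt0r_neq0.
have H2 : (fun n => z n.+1 x * (q x - c x)%:E) @ \oo --> zbar x * (q x - c x)%:E.
  apply: cvgeZr => //.
  have := zbar_cvg x; rewrite -cvg_shiftS; exact.
rewrite e in dc.
exact: (cvg_unique _ dc H2).
Qed.

Lemma hint (h : E -> R) (M : R) x : measurable_fun setT h ->
  (forall y, (`|h y| <= M)%R) -> (qk x).-integrable setT (EFin \o h).
Proof.
move=> mh hM; apply: measurable_bounded_integrable => //; first exact: qfin.
exact: bnd_of hM.
Qed.

Lemma Omega_eq (h : E -> R) (M : R) x : measurable_fun setT h ->
  (forall y, (`|h y| <= M)%R) ->
  Omega qk c h x = \int[qk x]_y (h y)%:E - ((q x - c x) * h x)%:E.
Proof.
move=> mh hM; rewrite /Omega.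
under eq_integral do rewrite EFinB.
rewrite integralB_EFin //; last 2 first.
- exact: hint hM.
- apply: measurable_bounded_integrable => //; first exact: qfin.
  exact: bounded_cst.
have -> : \int[qk x]_y (h x)%:E = (h x)%:E * (q x)%:E.
  by rewrite integral_cst // (proj2 Hq x).
have If := integrable_fin_num measurableT (@hint h M x mh hM).
rewrite -(fineK If) -EFinM -EFinB -EFinD -EFinB; congr EFin; ring.
Qed.

Lemma forward (h : E -> R) (M : R) : measurable_fun setT h ->
  (forall y, (`|h y| <= M)%R) -> (forall x, Omega qk c h x = 0) ->
  forall x, h x <> 0%R -> zbar x <> 0.
Proof.
move=> mh hM hO.
have A x : \int[qk x]_y (h y)%:E = ((q x - c x) * h x)%:E.
  have If := integrable_fin_num measurableT (@hint h M x mh hM).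
  have := hO x; rewrite (@Omega_eq h M x mh hM) -(fineK If) -EFinB.
  move=> /(congr1 fine)/= /eqP; rewrite subr_eq0 => /eqP e.
  by rewrite -e fineK.
have B n x : (`|h x|)%:E <= M%:E * z n x.
  elim: n x => [|n IH] x.
    by rewrite /z /= mule1 lee_fin.
  have qc := qc0 x.
  have M0 : (0 <= M)%R := le_trans (normr_ge0 _) (hM x).
  rewrite -(@lee_pmul2r _ ((q x - c x)%:E)) ?lte_fin //.
  have kq : (k x)%:E * (q x - c x)%:E = 1.
    by rewrite -EFinM /k mulVf // lt0r_neq0.
  rewrite zS -!muleA kq mule1 -EFinM.
  have -> : (`|h x| * (q x - c x))%:E = `| \int[qk x]_y (h y)%:E |.
    by rewrite A /= normrM (gtr0_norm qc) mulrC.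
  apply: le_trans (le_abse_integral _ measurableT _) _.
    exact/measurable_EFinP.
  rewrite -ge0_integralZl_EFin //; last 2 first.
  - by move=> y _; case/andP: ((z_prop n).2 y).
  - exact: (z_prop n).1.
  apply: ge0_le_integral => //.
  - apply: measurableT_comp => //; exact/measurable_EFinP.
  - apply: emeasurable_funM => //; exact: (z_prop n).1.
  - by move=> y _; exact: IH.
move=> x hx zx.
have hx0 : (0 < `|h x|)%R by rewrite normr_gt0; apply/eqP.
have Mpos : (0 < M)%R by apply: lt_le_trans hx0 (hM x).
have : ((`|h x| / M)%:E <= zbar x).
  apply/ereal_infP => _ [n _ <-].
  have /andP[z0 z1] := (z_prop n).2 x.
  have := B n x; rewrite -(bnd_fineK _ z0 z1) -EFinM !lee_fin.
  by rewrite ler_pdivrMr // mulrC.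
rewrite zx lee_fin; apply/negP; rewrite -ltNge.
by rewrite divr_gt0.
Qed.

Lemma backward x0 : zbar x0 <> 0 -> exists h : E -> R,
        measurable_fun setT h /\
        (exists M : R, forall x, (`|h x| <= M)%R) /\
        (exists x, h x <> 0%R) /\
        (forall x, Omega qk c h x = 0).
Proof.
move=> zx0.
have zb0 y : 0 <= zbar y by case/andP: (zbar_bnd y).
have zb1 y : zbar y <= 1 by case/andP: (zbar_bnd y).
have hb y : (0 <= fine (zbar y) <= 1)%R.
  by rewrite -!lee_fin (bnd_fineK _ (zb0 y) (zb1 y)) zb0 zb1.
have mh : measurable_fun setT (fun x => fine (zbar x)).
  by apply: measurableT_comp; [exact: fine_measurable | exact: mzbar].
have hM y : (`|fine (zbar y)| <= 1)%R.
  by have /andP[a b] := hb y; rewrite ger0_norm.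
exists (fun x => fine (zbar x)); split => //.
split; first by exists 1%R.
split.
  by exists x0 => h0; apply: zx0; rewrite -(bnd_fineK _ (zb0 x0) (zb1 x0)) h0.
move=> x; rewrite (@Omega_eq _ 1%R x mh hM) /=.
under eq_integral => y _ do rewrite (bnd_fineK _ (zb0 y) (zb1 y)).
rewrite zbar_eq -{1}(bnd_fineK _ (zb0 x) (zb1 x)) -EFinM -EFinB.
by rewrite mulrC subrr.
Qed.
End Main.

Theorem mainTheorem6 (d : measure_display) (E : measurableType d) (R : realType)
  (q : E -> R) (qk : E -> {measure set E -> \bar R}) (c : E -> R) :
  qpair_tsc q qk ->
  measurable_fun setT c ->
  (forall x, (c x <= 0)%R) ->
  (forall x, (0 < q x - c x)%R) ->
  (forall x (m n : nat), (m <= n)%N -> zseq q qk c n x <= zseq q qk c m x) /\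
  exists zbar : E -> \bar R,
    (forall x, (fun n => zseq q qk c n x) @ \oo --> zbar x) /\
    (forall x, 0 <= zbar x <= 1) /\
    ((exists h : E -> R,
        measurable_fun setT h /\
        (exists M : R, forall x, (`|h x| <= M)%R) /\
        (exists x, h x <> 0%R) /\
        (forall x, Omega qk c h x = 0))
     <-> (exists x, zbar x <> 0)).
Proof.
move=> Hq mc c0 qc0; split.
  by move=> x m n mn; apply: z_mono.
exists (fun x => ereal_inf (range (fun n => zseq q qk c n x))).
split; first by move=> x; apply: zbar_cvg.
split; first by move=> x; apply: zbar_bnd.
split.
  move=> [h [mh [[M hM] [[x hx] hO]]]]; exists x.
  apply: forward hx => //; eassumption.
by move=> [x0 zx0]; exact: (@backward d E R q qk c Hq mc c0 qc0 x0 zx0).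
Qed.
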